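(* Let $K$ be a field, let $\Lambda$ be the Grassmann algebra over $K$ on odd generators $x_0,x_1,x_2,\dots$, identify $x_i$ with the odd operator of left multiplication by $x_i$ on $\Lambda$, and let $\partial_i$ be the odd superderivation of $\Lambda$ with $\partial_i(x_j)=\delta_{ij}$. For $i\ge 0$ let $$v_i=\sum_{k\ge 0}\Big(\prod_{n=0}^{k-1}x_{i+3n}x_{i+3n+1}\Big)\partial_{i+3k}=\partial_i+x_ix_{i+1}\big(\partial_{i+3}+x_{i+3}x_{i+4}(\partial_{i+6}+\cdots)\big).$$ Then, for all $i,k\ge 0$, with $[a,b]=ab-(-1)^{|a||b|}ba$ the supercommutator in $\operatorname{End}\Lambda$, $$[v_i,v_{i+3k}]=2\Big(\prod_{n=0}^{k-1}x_{i+3n}x_{i+3n+1}\Big)x_{i+3k+1}v_{i+3k+3},$$ $$[v_i,v_{i+3k+1}]=-\Big(\prod_{n=0}^{k-1}x_{i+3n}x_{i+3n+1}\Big)x_{i+3k}v_{i+3k+3},$$ $$[v_i,v_{i+3k+2}]=-\Big(\prod_{n=0}^{k}x_{i+3n}x_{i+3n+1}\Big)x_{i+3k+2}v_{i+3k+5}.$$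
   Context: The $v_i$ are odd superderivations of $\Lambda$ given by formal infinite sums; applied to any element of $\Lambda$ only finitely many terms act nontrivially, so they are well-defined elements of $\operatorname{End}\Lambda$. All products of operators are compositions in $\operatorname{End}\Lambda$; $x_i,\partial_i$ are odd, with $\partial_ix_j+x_j\partial_i=\delta_{ij}$, $x_i^2=\partial_i^2=0$, and other pairs anticommuting. *)

(* Defs.v *)
From HB Require Import structures.
From mathcomp Require Import all_boot all_order all_algebra.
From mathcomp Require Import finmap.
Unset Strict Implicit. Unset Printing Implicit Defensive.
Import Order.TTheory GRing.Theory Num.Theory.
Local Open Scope fset_scope.
Local Open Scope ring_scope.

(* An element is given by its coefficients on the monomial basis
   x_S = x_{s_1} x_{s_2} ... x_{s_m}  (s_1 < s_2 < ... < s_m),  S : {fset nat}. *)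
Definition coeffs (K : fieldType) := {fset nat} -> K.

Definition grassmann (K : fieldType) (f : coeffs K) : Prop :=
  exists A : {fset {fset nat}}, forall S, S \notin A -> f S = 0.
Arguments grassmann {K} f.

(* operators on coefficient functions (restricted to Lambda they give End Lambda) *)
Definition op (K : fieldType) := coeffs K -> coeffs K.

(* number of elements of S smaller than i (sign of moving x_i into place) *)
Definition nbelow (S : {fset nat}) (i : nat) : nat := count (fun t => (t < i)%N) S.

(* left multiplication by x_i :  x_i x_S = (-1)^{#{s in S, s < i}} x_{S u {i}} if i \notin S, 0 else *)
Definition xop (K : fieldType) (i : nat) : op K := fun f T =>
  if i \in T then (-1) ^+ nbelow T i * f (T `\ i) else 0.

(* odd superderivation d_i with d_i(x_j) = delta_ij :
   d_i x_S = (-1)^{#{s in S, s < i}} x_{S \ {i}} if i \in S, 0 else *)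
Definition dop (K : fieldType) (i : nat) : op K := fun f T =>
  if i \notin T then (-1) ^+ nbelow T i * f (i |` T) else 0.

Fixpoint xprod (K : fieldType) (i k : nat) : op K :=
  match k with
  | 0 => id
  | k'.+1 => xprod K i k' \o (xop K (i + 3 * k') \o xop K (i + 3 * k').+1)
  end.

(* v_i = sum_{k>=0} (prod_{n<k} x_{i+3n} x_{i+3n+1}) d_{i+3k}.
   On the coefficient of x_T, the k-th term vanishes as soon as k >= max T + 2
   (it needs x_{i+3(k-1)} in T), so the formal sum is the finite sum below. *)
Definition vbound (T : {fset nat}) : nat := (\max_(t <- T) t).+2.

Definition vop (K : fieldType) (i : nat) : op K := fun f T =>
  \sum_(k < vbound T) (xprod K i k \o dop K (i + 3 * k)) f T.

(* supercommutator [a,b] = ab - (-1)^{|a||b|} ba, parities pa pb (true = odd) *)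
Definition scomm (K : fieldType) (pa pb : bool) (a b : op K) : op K := fun f T =>
  a (b f) T - (-1) ^+ (pa && pb) * b (a f) T.

(* Main.v *)
Require Import Defs.
From HB Require Import structures.
From mathcomp Require Import all_boot all_order all_algebra.
From mathcomp Require Import finmap.
From mathcomp Require Import boolp functions.
Import GRing.Theory.
Local Open Scope fset_scope.
Local Open Scope ring_scope.

Lemma nbelow_D1 (T : {fset nat}) a b : a \in T -> nbelow T b = ((a < b) + nbelow (T `\ a) b)%N.
Proof.
move=> aT; rewrite /nbelow -!sum1_count !(big_mkcond (fun t => (t < b)%N)) /=.
by rewrite (big_fsetD1 a) //=; case: (a < b)%N.
Qed.
Arguments nbelow_D1 [T a] b.
Lemma addfE (K : fieldType) (g h : coeffs K) T : (g + h) T = g T + h T.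
Proof. by []. Qed.
Lemma oppfE (K : fieldType) (g : coeffs K) T : (- g) T = - g T.
Proof. by []. Qed.
Lemma zerofE (K : fieldType) T : (0 : coeffs K) T = 0.
Proof. by []. Qed.
Lemma xopD K a (g h : coeffs K) : xop K a (g + h) = xop K a g + xop K a h.
Proof. by apply/funext => T; rewrite /xop !addfE; case: ifP => _; rewrite ?mulrDr ?addr0. Qed.
Lemma xopN K a (g : coeffs K) : xop K a (- g) = - xop K a g.
Proof. by apply/funext => T; rewrite /xop !oppfE; case: ifP => _; rewrite ?mulrN ?oppr0. Qed.
Lemma dopD K a (g h : coeffs K) : dop K a (g + h) = dop K a g + dop K a h.
Proof. by apply/funext => T; rewrite /dop !addfE; case: ifP => _; rewrite ?mulrDr ?addr0. Qed.
Lemma dopN K a (g : coeffs K) : dop K a (- g) = - dop K a g.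
Proof. by apply/funext => T; rewrite /dop !oppfE; case: ifP => _; rewrite ?mulrN ?oppr0. Qed.
Lemma XXs K a (g : coeffs K) : xop K a (xop K a g) = 0.
Proof. by apply/funext => T; rewrite /xop zerofE in_fsetD1 eqxx /=; case: ifP; rewrite ?mulr0. Qed.
Lemma XX K a b (g : coeffs K) : a != b -> xop K a (xop K b g) = - xop K b (xop K a g).
Proof.
move=> ab; apply/funext => T; rewrite oppfE /xop !in_fsetD1 eq_sym ab /=.
case aT: (a \in T); case bT: (b \in T); rewrite /= ?mulr0 ?oppr0 //.
rewrite !fsetDDl fsetUC (nbelow_D1 a bT) (nbelow_D1 b aT) !exprD.
case: ltngtP ab => h; rewrite ?eqxx //= => _.
all: by rewrite ?expr0 ?expr1 ?mul1r ?mulN1r ?mulNr ?opprK mulrCA.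
Qed.
Lemma nbelow_U1 (T : {fset nat}) a c : a \notin T -> nbelow (a |` T) c = ((a < c) + nbelow T c)%N.
Proof. by move=> aT; rewrite (nbelow_D1 c (fset1U1 a T)) fsetU1K. Qed.
Lemma fsetU1D1 (T : {fset nat}) a b : a != b -> (a |` T) `\ b = a |` (T `\ b).
Proof.
move=> ab; apply/fsetP => x; rewrite !(in_fsetD1, in_fset1U).
by case: (eqVneq x a) => [->|]; rewrite ?ab.
Qed.
Lemma sgn_sq (K : fieldType) n : (-1) ^+ n * (-1) ^+ n = 1 :> K.
Proof. by rewrite -exprMn mulrNN mulr1 expr1n. Qed.
Ltac sgnfin := rewrite ?expr0 ?expr1 ?mul1r ?mulN1r ?mulNr ?mulrN ?opprK; first [done | by rewrite mulrCA].
Lemma DX K a b (g : coeffs K) : a != b -> dop K a (xop K b g) = - xop K b (dop K a g).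
Proof.
move=> ab; have ab' : (a == b) = false by apply/negbTE.
have ba : (b == a) = false by rewrite eq_sym.
apply/funext => T; rewrite oppfE /xop /dop in_fset1U in_fsetD1 ab' ba /=.
case aT: (a \in T); case bT: (b \in T); rewrite /= ?mulr0 ?oppr0 //.
rewrite (@fsetU1D1 T a b ab) (nbelow_U1 _ _ b (negbT aT)) (nbelow_D1 a bT) !exprD.
case: ltngtP ab => h; rewrite ?eqxx //= => _.
all: sgnfin.
Qed.
Lemma DXs K a (g : coeffs K) : dop K a (xop K a g) + xop K a (dop K a g) = g.
Proof.
apply/funext => T; rewrite addfE /xop /dop in_fset1U in_fsetD1 eqxx /=.
case aT: (a \in T); rewrite /= ?mulr0 ?add0r ?addr0.
  by rewrite (nbelow_D1 a aT) ltnn /= fsetD1K // mulrA sgn_sq mul1r.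
by rewrite (nbelow_U1 _ _ a (negbT aT)) ltnn /= fsetU1K ?aT // mulrA sgn_sq mul1r.
Qed.
Lemma DDs K a (g : coeffs K) : dop K a (dop K a g) = 0.
Proof. by apply/funext => T; rewrite /dop zerofE in_fset1U eqxx /=; case: ifP; rewrite ?mulr0. Qed.
Lemma DD K a b (g : coeffs K) : a != b -> dop K a (dop K b g) = - dop K b (dop K a g).
Proof.
move=> ab; have ab' : (a == b) = false by apply/negbTE.
have ba : (b == a) = false by rewrite eq_sym.
apply/funext => T; rewrite oppfE /dop !in_fset1U ab' ba /=.
case aT: (a \in T); case bT: (b \in T); rewrite /= ?mulr0 ?oppr0 //.
rewrite !fsetUA (fsetUC [fset b]) (nbelow_U1 _ _ b (negbT aT)) (nbelow_U1 _ _ a (negbT bT)) !exprD.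
case: ltngtP ab => h; rewrite ?eqxx //= => _.
all: sgnfin.
Qed.
Fixpoint vt (K : fieldType) (n j : nat) : op K :=
  match n with
  | 0 => dop K j
  | n'.+1 => fun g => dop K j g + xop K j (xop K j.+1 (vt K n' (j + 3) g))
  end.
Lemma xop0 K a : xop K a 0 = 0.
Proof. by apply/funext => T; rewrite /xop zerofE; case: ifP; rewrite ?mulr0. Qed.
Lemma dop0 K a : dop K a 0 = 0.
Proof. by apply/funext => T; rewrite /dop zerofE; case: ifP; rewrite ?mulr0. Qed.
Lemma sumfE K m (F : nat -> coeffs K) T : (\sum_(k < m) F k) T = \sum_(k < m) F k T.
Proof. by elim/big_rec2: _ => // k x y _ <-. Qed.
Lemma xop_sum K a m (F : nat -> coeffs K) : xop K a (\sum_(k < m) F k) = \sum_(k < m) xop K a (F k).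
Proof. exact: (big_morph (xop K a) (@xopD K a) (@xop0 K a)). Qed.
Lemma xprod_S K i k : xprod K i k.+1 = xprod K i k \o (xop K (i + 3 * k) \o xop K (i + 3 * k).+1).
Proof. by []. Qed.
Lemma xprod_Sh K i k h : xprod K i k.+1 h = xprod K i k (xop K (i + 3 * k) (xop K (i + 3 * k).+1 h)).
Proof. by []. Qed.
Lemma xprodS K i k h : xprod K i k.+1 h = xop K i (xop K i.+1 (xprod K (i + 3) k h)).
Proof.
elim: k i h => [|k IH] i h; first by rewrite xprod_Sh muln0 addn0.
by rewrite xprod_Sh IH [xprod K (i + 3) k.+1 h]xprod_Sh mulnS addnA.
Qed.
Lemma xop_big K a (I : Type) (r : seq I) (P : pred I) (F : I -> coeffs K) :
  xop K a (\sum_(k <- r | P k) F k) = \sum_(k <- r | P k) xop K a (F k).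
Proof. exact: (big_morph (xop K a) (@xopD K a) (@xop0 K a)). Qed.
Lemma sumfE' K (I : Type) (r : seq I) (P : pred I) (F : I -> coeffs K) T :
  (\sum_(k <- r | P k) F k) T = \sum_(k <- r | P k) F k T.
Proof. by elim/big_rec2: _ => // k x y _ <-. Qed.
Lemma vtE K n j (g : coeffs K) : vt K n j g = \sum_(k < n.+1) xprod K j k (dop K (j + 3 * k) g).
Proof.
elim: n j => [|n IH] j; first by rewrite big_ord1 /= muln0 addn0.
rewrite [LHS]/= IH xop_big xop_big [RHS]big_ord_recl; congr (_ + _).
  by rewrite /= muln0 addn0.
apply: eq_bigr => k _; have -> : (lift ord0 k : nat) = k.+1 by [].
by rewrite xprodS mulnS addnA.
Qed.
Definition lowering (K : fieldType) (F : op K) :=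
  forall T, exists c T', T' `<=` T /\ forall h : coeffs K, F h T = c * h T'.
Arguments lowering {K}.
Lemma lowering_x K a : lowering (xop K a).
Proof.
move=> T; case aT: (a \in T).
  by exists ((-1) ^+ nbelow T a), (T `\ a); split; [exact: fsubsetDl | move=> h; rewrite /xop aT].
by exists 0, T; split; [exact: fsubset_refl | move=> h; rewrite /xop aT mul0r].
Qed.
Lemma lowering_comp K (F G : op K) : lowering F -> lowering G -> lowering (F \o G).
Proof.
move=> hF hG T; have [c1 [T1 [s1 e1]]] := hF T; have [c2 [T2 [s2 e2]]] := hG T1.
exists (c1 * c2), T2; split; first exact: fsubset_trans s2 s1.
by move=> h; rewrite /= e1 e2 mulrA.
Qed.
Lemma lowering_xprod K i k : lowering (xprod K i k).
Proof.
elim: k => [|k IH]; first by move=> T; exists 1, T; split; [exact: fsubset_refl | move=> h; rewrite mul1r].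
by rewrite xprod_S; apply: lowering_comp => //; apply: lowering_comp; apply: lowering_x.
Qed.
Lemma low_ext K (F : op K) (h h' : coeffs K) T : lowering F ->
  (forall T', T' `<=` T -> h T' = h' T') -> F h T = F h' T.
Proof. by move=> hF e; have [c [T' [s E]]] := hF T; rewrite !E e. Qed.
Lemma le_bigmax_T (T : {fset nat}) t : t \in T -> (t <= \max_(s <- T) s)%N.
Proof. by move=> tT; rewrite (big_fsetD1 t) //= leq_maxl. Qed.
Lemma vbound_sub (T' T : {fset nat}) : T' `<=` T -> (vbound T' <= vbound T)%N.
Proof.
move=> s; rewrite /vbound ltnS ltnS; apply/bigmax_leqP_seq => t tT' _.
by apply: le_bigmax_T; apply: (fsubsetP s).
Qed.
Lemma vanish K j k (h : coeffs K) T : (vbound T <= k)%N -> xprod K j k h T = 0.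
Proof.
case: k => [|k] hk; first by move: hk; rewrite /vbound.
rewrite xprod_Sh; have [c [T' [s ->]]] := lowering_xprod K j k T.
rewrite /xop; case: ifP => aT'; last by rewrite mulr0.
have hm : (j + 3 * k <= \max_(t <- T) t)%N by apply: le_bigmax_T; exact: (fsubsetP s).
have h1 : (k <= j + 3 * k)%N by exact: leq_trans (leq_pmull k (isT : (0 < 3)%N)) (leq_addl j _).
rewrite /vbound ltnS in hk.
by move: (leq_trans hk (leq_trans h1 hm)); rewrite ltnn.
Qed.
Lemma vop_vt K n j (g : coeffs K) T : (vbound T <= n.+1)%N -> vop K j g T = vt K n j g T.
Proof.
move=> hn; rewrite /vop vtE sumfE' (big_ord_widen n.+1 (fun k => (xprod K j k \o dop K (j + 3 * k)) g T) hn).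
rewrite big_mkcond /=; apply: eq_bigr => k _; case: ifP => // /negbT; rewrite -leqNgt => hk.
by rewrite vanish.
Qed.
Lemma vtS K n j (g : coeffs K) : vt K n.+1 j g = dop K j g + xop K j (xop K j.+1 (vt K n (j + 3) g)).
Proof. by []. Qed.
Lemma Vrec K j (g : coeffs K) : vop K j g = dop K j g + xop K j (xop K j.+1 (vop K (j + 3) g)).
Proof.
apply/funext => T; rewrite (@vop_vt K (vbound T).+1 j g T (leqW (leqnSn _))) vtS !addfE; congr (_ + _).
apply: (@low_ext K (xop K j \o xop K j.+1)); first by apply: lowering_comp; apply: lowering_x.
move=> T' s; rewrite (@vop_vt K (vbound T)) //; apply: leqW; exact: vbound_sub.
Qed.
Lemma vtD K n j (g h : coeffs K) : vt K n j (g + h) = vt K n j g + vt K n j h.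
Proof.
elim: n j => [|n IH] j /=; first exact: dopD.
by rewrite IH !xopD dopD addrACA.
Qed.
Lemma vtN K n j (g : coeffs K) : vt K n j (- g) = - vt K n j g.
Proof.
elim: n j => [|n IH] j /=; first exact: dopN.
by rewrite IH !xopN dopN opprD.
Qed.
Lemma vopD K j (g h : coeffs K) : vop K j (g + h) = vop K j g + vop K j h.
Proof.
apply/funext => T; rewrite addfE !(fun j g => @vop_vt K (vbound T) j g T (leqnSn _)).
by rewrite vtD.
Qed.
Lemma vopN K j (g : coeffs K) : vop K j (- g) = - vop K j g.
Proof.
apply/funext => T; rewrite oppfE !(fun j g => @vop_vt K (vbound T) j g T (leqnSn _)).
by rewrite vtN.
Qed.
Lemma neqS m j : (m < j)%N -> (j != m) && (j.+1 != m).
Proof. by move=> h; have h2 : (m < j.+1)%N := ltn_trans h (ltnSn j); rewrite !neq_ltn h h2 !orbT. Qed.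
Lemma XDc K a b (g : coeffs K) : a != b -> xop K b (dop K a g) = - dop K a (xop K b g).
Proof. by move=> ab; rewrite DX // opprK. Qed.
Arguments neqS [m j].
Lemma vtX K n j m (g : coeffs K) : (m < j)%N -> vt K n j (xop K m g) = - xop K m (vt K n j g).
Proof.
elim: n j => [|n IH] j hmj; have /andP [h0 h1] := neqS hmj.
  exact: DX.
rewrite !vtS IH; last exact: ltn_addr.
rewrite xopN xopN (XX K j.+1 m _ h1) xopN (XX K j m _ h0) !opprK xopD opprD DX //.
Qed.
Lemma VX K j m (g : coeffs K) : (m < j)%N -> vop K j (xop K m g) = - xop K m (vop K j g).
Proof.
move=> hmj; apply/funext => T.
rewrite oppfE (@vop_vt K (vbound T) j _ T (leqnSn _)) vtX // oppfE; congr (- _).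
apply: low_ext (lowering_x K m) _ => T' s.
rewrite (@vop_vt K (vbound T)) //; apply: leqW; exact: vbound_sub.
Qed.
Lemma vtDm K n j m (g : coeffs K) : (m < j)%N -> vt K n j (dop K m g) = - dop K m (vt K n j g).
Proof.
elim: n j => [|n IH] j hmj; have /andP [h0 h1] := neqS hmj.
  exact: DD.
rewrite !vtS IH; last exact: ltn_addr.
have h1' : m != j.+1 by rewrite eq_sym.
have h0' : m != j by rewrite eq_sym.
rewrite xopN xopN (XDc K m j.+1 _ h1') xopN (XDc K m j _ h0') !opprK dopD opprD DD //.
Qed.
Lemma VDm K j m (g : coeffs K) : (m < j)%N -> vop K j (dop K m g) = - dop K m (vop K j g).
Proof.
move=> hmj; apply/funext => T.
have hb : (vbound T <= (vbound (m |` T)).+1)%N by apply: leqW; apply: vbound_sub; exact: fsubsetU1.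
rewrite oppfE (@vop_vt K (vbound (m |` T)) j _ T hb) vtDm // oppfE; congr (- _).
rewrite /dop; case: ifP => // _.
by rewrite (@vop_vt K (vbound (m |` T))) // leqnSn.
Qed.
Lemma DXs' K a (g : coeffs K) : dop K a (xop K a g) = g - xop K a (dop K a g).
Proof. by apply/eqP; rewrite eq_sym subr_eq DXs. Qed.
Lemma lt3 i : (i < i + 3)%N.
Proof. by rewrite -{1}[i]addn0 ltn_add2l. Qed.
Lemma lt3S i : (i.+1 < i + 3)%N.
Proof. by rewrite -addn1 ltn_add2l. Qed.
Lemma lt3SS i : (i.+2 < i + 3)%N.
Proof. by rewrite -addn2 ltn_add2l. Qed.
Lemma UX K j (h : coeffs K) : vop K j (xop K j h) = h - xop K j (vop K j h).
Proof.
have hj := lt3 j.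
have hj1 : j.+1 != j by rewrite neq_ltn ltnSn orbT.
rewrite [vop K j (xop K j h)]Vrec (VX K (j + 3) j _ hj) xopN (XX K j.+1 j _ hj1).
by rewrite opprK XXs addr0 DXs' [vop K j h]Vrec xopD XXs addr0.
Qed.
Lemma Red K i j (g : coeffs K) : (i + 3 <= j)%N ->
  vop K i (vop K j g) + vop K j (vop K i g) =
  xop K i (xop K i.+1 (vop K (i + 3) (vop K j g) + vop K j (vop K (i + 3) g))).
Proof.
move=> hij.
have h0 : (i < j)%N := leq_trans (lt3 i) hij.
have h1 : (i.+1 < j)%N := leq_trans (lt3S i) hij.
rewrite [vop K i (vop K j g)]Vrec [vop K i g]Vrec vopD (VDm K j i _ h0) (VX K j i _ h0) (VX K j i.+1 _ h1).
rewrite xopN opprK !xopD addrACA addrN add0r //.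
Qed.
Lemma Vsq K i (g : coeffs K) : vop K i (vop K i g) = xop K i.+1 (vop K (i + 3) g).
Proof.
have hi : i != i.+1 by rewrite neq_ltn ltnSn.
have hi' : i.+1 != i by rewrite eq_sym.
have h0 := lt3 i.
have h1 := lt3S i.
have e1 : dop K i (vop K i g) = xop K i.+1 (vop K (i + 3) g) + xop K i (xop K i.+1 (dop K i (vop K (i + 3) g))).
  by rewrite [vop K i g]Vrec dopD DDs add0r DXs' (DX K i i.+1 _ hi) xopN opprK.
have e2 : vop K (i + 3) (vop K i g) = - dop K i (vop K (i + 3) g) + xop K i (xop K i.+1 (vop K (i + 3) (vop K (i + 3) g))).
  by rewrite [vop K i g]Vrec vopD (VDm K (i + 3) i _ h0) (VX K (i + 3) i _ h0) (VX K (i + 3) i.+1 _ h1) xopN opprK.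
rewrite [vop K i (vop K i g)]Vrec e1 e2 !xopD xopN xopN (XX K i.+1 i _ hi') XXs xop0 oppr0 xop0 addr0.
by rewrite addrK.
Qed.
Lemma B2 K i (g : coeffs K) : vop K i (vop K i.+1 g) + vop K i.+1 (vop K i g) = - xop K i (vop K (i + 3) g).
Proof.
have h01 : (i < i.+1)%N := ltnSn i.
have h0 := lt3 i. have h1 := lt3S i.
have h2 : (i.+1 < i.+1 + 3)%N := lt3 i.+1. have h3 : (i.+2 < i.+1 + 3)%N := lt3S i.+1.
have e3 : vop K (i + 3) (vop K i.+1 g) + vop K i.+1 (vop K (i + 3) g) =
   xop K i.+1 (xop K i.+2 (vop K (i + 3) (vop K (i.+1 + 3) g)) + xop K i.+2 (vop K (i.+1 + 3) (vop K (i + 3) g))).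
  rewrite [vop K i.+1 g]Vrec [vop K i.+1 (vop K (i + 3) g)]Vrec vopD.
  have h4 := lt3SS i.
  rewrite (VDm K (i + 3) i.+1 _ h1) (VX K (i + 3) i.+1 _ h1) (VX K (i + 3) i.+2 _ h4) xopN opprK.
  by rewrite addrACA addNr add0r xopD.
have e4 : xop K i (xop K i.+1 (vop K (i + 3) (vop K i.+1 g))) = - xop K i (xop K i.+1 (vop K i.+1 (vop K (i + 3) g))).
  by apply/eqP; rewrite -subr_eq0 opprK -xopD -xopD e3 XXs xop0.
rewrite [vop K i (vop K i.+1 g)]Vrec [vop K i g]Vrec vopD (VDm K i.+1 i _ h01) (VX K i.+1 i _ h01) UX e4.
by rewrite xopD xopN opprD opprK addrACA addrN add0r addrCA addNr addr0.
Qed.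
Lemma B3 K i (g : coeffs K) : vop K i (vop K i.+2 g) + vop K i.+2 (vop K i g) =
  - xop K i (xop K i.+1 (xop K i.+2 (vop K (i.+2 + 3) g))).
Proof.
have h02 : (i < i.+2)%N := leqW (ltnSn i).
have h12 : (i.+1 < i.+2)%N := ltnSn i.+1.
rewrite [vop K i (vop K i.+2 g)]Vrec [vop K i g]Vrec vopD (VDm K i.+2 i _ h02) (VX K i.+2 i _ h02) (VX K i.+2 i.+1 _ h12) xopN opprK.
rewrite addrACA addrN add0r -!xopD [(i + 3)%N]addn3.
by rewrite addrC (B2 K i.+2 g) !xopN.
Qed.
Lemma Main K k i (g : coeffs K) :
  [/\ vop K i (vop K (i + 3 * k) g) + vop K (i + 3 * k) (vop K i g) =
        xprod K i k (xop K (i + 3 * k).+1 (vop K (i + 3 * k + 3) g)) +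
        xprod K i k (xop K (i + 3 * k).+1 (vop K (i + 3 * k + 3) g)),
      vop K i (vop K (i + 3 * k + 1) g) + vop K (i + 3 * k + 1) (vop K i g) =
        - xprod K i k (xop K (i + 3 * k) (vop K (i + 3 * k + 3) g)) &
      vop K i (vop K (i + 3 * k + 2) g) + vop K (i + 3 * k + 2) (vop K i g) =
        - xprod K i k.+1 (xop K (i + 3 * k + 2) (vop K (i + 3 * k + 5) g))].
Proof.
elim: k i => [|k IH] i.
  rewrite muln0 !addn0 addn1 addn2 Vsq B2 B3.
  rewrite xprod_Sh muln0 addn0.
  have -> : (i + 5 = i.+2 + 3)%N by rewrite !addSn !addnS.
  by split.
have e : (i + 3 * k.+1 = i + 3 + 3 * k)%N by rewrite mulnS addnA.
have [IH1 IH2 IH3] := IH (i + 3)%N.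
rewrite e.
have ha : (i + 3 <= i + 3 + 3 * k)%N := leq_addr _ _.
have hb : (i + 3 <= i + 3 + 3 * k + 1)%N := leq_trans ha (leq_addr _ _).
have hc : (i + 3 <= i + 3 + 3 * k + 2)%N := leq_trans ha (leq_addr _ _).
rewrite (Red K i _ g ha) (Red K i _ g hb) (Red K i _ g hc) IH1 IH2 IH3.
rewrite !xprodS !xopD !xopN.
by split.
Qed.

Theorem lemma4p2 (K : fieldType) (i k : nat) (f : coeffs K) :
  grassmann f ->
  [/\ scomm K true true (vop K i) (vop K (i + 3 * k)) f =
        (fun T => 2 * (xprod K i k \o xop K (i + 3 * k).+1 \o vop K (i + 3 * k + 3)) f T),
      scomm K true true (vop K i) (vop K (i + 3 * k + 1)) f =
        (fun T => - (xprod K i k \o xop K (i + 3 * k) \o vop K (i + 3 * k + 3)) f T) &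
      scomm K true true (vop K i) (vop K (i + 3 * k + 2)) f =
        (fun T => - (xprod K i k.+1 \o xop K (i + 3 * k + 2) \o vop K (i + 3 * k + 5)) f T)].
Proof.
move=> _; have [M1 M2 M3] := Main K k i f.
have s : (-1) ^+ (true && true) = -1 :> K by [].
split; apply/funext => T; rewrite /scomm s mulN1r opprK -addfE.
- by rewrite M1 addfE mulr_natl mulr2n.
- by rewrite M2 oppfE.
- by rewrite M3 oppfE.
Qed.
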